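(* Let $\{Y_x\}_{x\in\mathcal{X}}$ be a Gaussian process with prior mean $\mu_x$ and prior covariance $\sigma_{xx'}$. Let $\mathcal{D}\subset\mathcal{X}$ be a finite set of inputs with observed outputs $y_{\mathcal{D}}$, partitioned into pairwise disjoint sets $\mathcal{D}_1,\ldots,\mathcal{D}_M$ with $|\mathcal{D}_m|=|\mathcal{D}|/M$, and let $\mathcal{U}\subseteq\mathcal{X}\setminus\mathcal{D}$ be a finite set of test inputs. Let $\sigma_n^2>0$ and let $F\in\mathbb{R}^{R\times|\mathcal{D}|}$ be the (upper triangular) incomplete Cholesky factor used to approximate $\Sigma_{\mathcal{D}\mathcal{D}}\approx F^\top F+\sigma_n^2 I$, written columnwise as $F=(F_1\cdots F_M)$ with $F_m\in\mathbb{R}^{R\times|\mathcal{D}_m|}$ the columns corresponding to $\mathcal{D}_m$. For $m=1,\ldots,M$ define $\dot{y}_m\triangleq F_m(y_{\mathcal{D}_m}-\mu_{\mathcal{D}_m})$, $\dot{\Sigma}_m\triangleq F_m\Sigma_{\mathcal{D}_m\mathcal{U}}$, $\Phi_m\triangleq F_mF_m^\top$; let $\Phi\triangleq I+\sigma_n^{-2}\sum_{m=1}^M\Phi_m$, $\ddot{y}\triangleq\Phi^{-1}\sum_{m=1}^M\dot{y}_m$, $\ddot{\Sigma}\triangleq\Phi^{-1}\sum_{m=1}^M\dot{\Sigma}_m$; let $\widetilde{\mu}^m_{\mathcal{U}}\triangleq\sigma_n^{-2}\Sigma_{\mathcal{U}\mathcal{D}_m}(y_{\mathcal{D}_m}-\mu_{\mathcal{D}_m})-\sigma_n^{-4}\dot{\Sigma}_m^\top\ddot{y}$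 and $\widetilde{\Sigma}^m_{\mathcal{U}\mathcal{U}}\triangleq\sigma_n^{-2}\Sigma_{\mathcal{U}\mathcal{D}_m}\Sigma_{\mathcal{D}_m\mathcal{U}}-\sigma_n^{-4}\dot{\Sigma}_m^\top\ddot{\Sigma}$; and let $\widetilde{\mu}_{\mathcal{U}}\triangleq\mu_{\mathcal{U}}+\sum_{m=1}^M\widetilde{\mu}^m_{\mathcal{U}}$ and $\widetilde{\Sigma}_{\mathcal{U}\mathcal{U}}\triangleq\Sigma_{\mathcal{U}\mathcal{U}}-\sum_{m=1}^M\widetilde{\Sigma}^m_{\mathcal{U}\mathcal{U}}$. Let $\mu^{\mathrm{ICF}}_{\mathcal{U}|\mathcal{D}}\triangleq\mu_{\mathcal{U}}+\Sigma_{\mathcal{U}\mathcal{D}}(F^\top F+\sigma_n^2I)^{-1}(y_{\mathcal{D}}-\mu_{\mathcal{D}})$ and $\Sigma^{\mathrm{ICF}}_{\mathcal{U}\mathcal{U}|\mathcal{D}}\triangleq\Sigma_{\mathcal{U}\mathcal{U}}-\Sigma_{\mathcal{U}\mathcal{D}}(F^\top F+\sigma_n^2I)^{-1}\Sigma_{\mathcal{D}\mathcal{U}}$. Then $\widetilde{\mu}_{\mathcal{U}}=\mu^{\mathrm{ICF}}_{\mathcal{U}|\mathcal{D}}$ and $\widetilde{\Sigma}_{\mathcal{U}\mathcal{U}}=\Sigma^{\mathrm{ICF}}_{\mathcal{U}\mathcal{U}|\mathcal{D}}$.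
   Context: For finite sets $\mathcal{A},\mathcal{B}\subset\mathcal{X}$, $\mu_{\mathcal{A}}$ denotes the column vector of prior means $\mu_x$, $x\in\mathcal{A}$, and $\Sigma_{\mathcal{A}\mathcal{B}}$ the matrix of prior covariances $\sigma_{xx'}$, $x\in\mathcal{A}$, $x'\in\mathcal{B}$; $\Sigma_{\mathcal{B}\mathcal{A}}$ is its transpose. Vectors and matrices indexed by $\mathcal{D}$ are ordered consistently with the partition $\mathcal{D}_1,\ldots,\mathcal{D}_M$ (the same ordering as the columns of $F$). $I$ denotes an identity matrix of the appropriate size. *)

(* Defs.v *)
From HB Require Import structures.
From mathcomp Require Import all_boot all_order all_algebra.
Set Implicit Arguments. Unset Strict Implicit. Unset Printing Implicit Defensive.
Import Order.TTheory GRing.Theory Num.Theory.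
Local Open Scope ring_scope.

Section GPDefs.
Variables (R : realFieldType) (X : Type).
Variables (mu : X -> R) (sigma : X -> X -> R).

Definition muv n (a : 'I_n -> X) : 'cV[R]_n := \col_i mu (a i).
Definition Sig m n (a : 'I_m -> X) (b : 'I_n -> X) : 'M[R]_(m, n) :=
  \matrix_(i, j) sigma (a i) (b j).

Definition is_covariance : Prop :=
  (forall x x', sigma x x' = sigma x' x) /\
  (forall n (a : 'I_n -> X) (c : 'cV[R]_n), 0 <= ((c^T *m Sig a a *m c) 0 0)).

(* D is indexed by 'I_(M*k), ordered consistently with the partition:
   the j-th element of block D_m has index mxvec_index m j (block m occupies
   the contiguous indices m*k, ..., m*k + k - 1). *)
Variables (M k u r : nat).
Variables (dD : 'I_(M * k) -> X) (uU : 'I_u -> X).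
Variables (y : 'cV[R]_(M * k)) (s2 : R) (F : 'M[R]_(r, M * k)).

Definition Dm (m : 'I_M) : 'I_k -> X := fun j => dD (mxvec_index m j).
Definition ydm (m : 'I_M) : 'cV[R]_k := \col_j y (mxvec_index m j) 0.
Definition Fm (m : 'I_M) : 'M[R]_(r, k) := colsub (mxvec_index m) F.

Definition ydot (m : 'I_M) : 'cV[R]_r := Fm m *m (ydm m - muv (Dm m)).
Definition Sdot (m : 'I_M) : 'M[R]_(r, u) := Fm m *m Sig (Dm m) uU.
Definition Phim (m : 'I_M) : 'M[R]_r := Fm m *m (Fm m)^T.
Definition Phi : 'M[R]_r := 1%:M + s2^-1 *: \sum_(m < M) Phim m.
Definition yddot : 'cV[R]_r := invmx Phi *m \sum_(m < M) ydot m.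
Definition Sddot : 'M[R]_(r, u) := invmx Phi *m \sum_(m < M) Sdot m.

Definition mu_tilde_m (m : 'I_M) : 'cV[R]_u :=
  s2^-1 *: (Sig uU (Dm m) *m (ydm m - muv (Dm m)))
  - s2^-2 *: ((Sdot m)^T *m yddot).
Definition Sig_tilde_m (m : 'I_M) : 'M[R]_u :=
  s2^-1 *: (Sig uU (Dm m) *m Sig (Dm m) uU)
  - s2^-2 *: ((Sdot m)^T *m Sddot).

Definition mu_tilde : 'cV[R]_u := muv uU + \sum_(m < M) mu_tilde_m m.
Definition Sig_tilde : 'M[R]_u := Sig uU uU - \sum_(m < M) Sig_tilde_m m.

Definition mu_ICF : 'cV[R]_u :=
  muv uU + Sig uU dD *m invmx (F^T *m F + s2%:M) *m (y - muv dD).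
Definition Sig_ICF : 'M[R]_u :=
  Sig uU uU - Sig uU dD *m invmx (F^T *m F + s2%:M) *m Sig dD uU.

End GPDefs.

(* Main.v *)
Set Warnings "-notation-overridden,-ambiguous-paths,-deprecated".
Require Import Defs.
From HB Require Import structures.
From mathcomp Require Import all_boot all_order all_algebra.
Set Implicit Arguments.
Import Order.TTheory GRing.Theory Num.Theory.
Local Open Scope ring_scope.

Lemma blocksum (R : comRingType) M k p q (G : 'M[R]_(p, M * k)) (H : 'M[R]_(M * k, q)) :
  \sum_(m < M) colsub (mxvec_index m) G *m rowsub (mxvec_index m) H = G *m H.
Proof.
apply/matrixP => i l; rewrite summxE !mxE.
under eq_bigr => m _ do rewrite mxE.
rewrite pair_big /= (reindex (uncurry (@mxvec_index M k)) (@curry_mxvec_bij M k)) /=.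
by apply: eq_bigr => -[a b] _; rewrite !mxE.
Qed.

Lemma sqpos (R : realFieldType) n (w : 'rV[R]_n) :
  (w *m w^T) 0 0 = \sum_j w 0 j ^+ 2.
Proof. by rewrite mxE; apply: eq_bigr => j _; rewrite mxE expr2. Qed.

Lemma sq_eq0 (R : realFieldType) n (w : 'rV[R]_n) :
  (w *m w^T) 0 0 = 0 -> w = 0.
Proof.
rewrite sqpos => /psumr_eq0P H; apply/rowP => j; rewrite mxE.
by apply/eqP; rewrite -sqrf_eq0; apply/eqP; apply: H => // i _; rewrite sqr_ge0.
Qed.

Lemma Phi_unit (R : realFieldType) r N (P : 'M[R]_(r, N)) c :
  0 < c -> 1%:M + c *: (P *m P^T) \in unitmx.
Proof.
move=> c0; rewrite -row_free_unit -kermx_eq0; apply/negPn/negP => nz.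
have [i nzi] : exists i, row i (kermx (1%:M + c *: (P *m P^T))) != 0.
  apply/existsP; move: nz; apply: contraR; rewrite negb_exists => /forallP H.
  apply/eqP/row_matrixP => i; rewrite row0; exact/eqP/negbNE/H.
set v := row i _ in nzi.
have : v *m (1%:M + c *: (P *m P^T)) = 0 by apply/sub_kermxP; exact: row_sub.
move=> /(congr1 (fun z => (z *m v^T) 0 0)).
rewrite mulmxDr mulmx1 -scalemxAr mulmxDl scalemxAl mulmxA mul0mx mxE.
rewrite -!scalemxAl mxE -[v *m P *m P^T *m v^T]mulmxA -trmx_mul.
move=> E.
have h1 : \sum_j v 0 j * v^T j 0 = (v *m v^T) 0 0 by rewrite mxE.
rewrite h1 [X in _ + X = _]mxE [RHS]mxE in E.
have g1 : 0 <= (v *m v^T) 0 0 by rewrite sqpos; apply: sumr_ge0 => j _; exact: sqr_ge0.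
have g2 : 0 <= c * (v *m P *m (v *m P)^T) 0 0.
  by apply: mulr_ge0; [exact: ltW | rewrite sqpos; apply: sumr_ge0 => j _; exact: sqr_ge0].
move: E => /eqP; rewrite paddr_eq0 //.
case/andP=> /eqP /sq_eq0 v0 _; by rewrite v0 eqxx in nzi.
Qed.

Lemma woodbury (R : realFieldType) r N (F : 'M[R]_(r, N)) s2 :
  0 < s2 ->
  invmx (F^T *m F + s2%:M) =
  s2^-1 *: 1%:M - s2^-2 *: (F^T *m invmx (1%:M + s2^-1 *: (F *m F^T)) *m F).
Proof.
move=> s0; have s2n0 : s2 != 0 by rewrite gt_eqF.
set Ph := 1%:M + _.
have uPh : Ph \in unitmx by apply: Phi_unit; rewrite invr_gt0.
set A := F^T *m F + s2%:M.
have hAF : A *m F^T = s2 *: (F^T *m Ph).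
  rewrite /A /Ph mulmxDl mulmxDr mulmx1 mul_scalar_mx -scalemxAr scalerDr scalerA.
  by rewrite mulfV // scale1r mulmxA addrC.
set W := _ - _.
have AW : A *m W = 1%:M.
  rewrite /W mulmxBr -!scalemxAr mulmx1 !mulmxA hAF -!scalemxAl -(mulmxA F^T) mulmxV //.
  rewrite mulmx1 scalerA /A scalerDr.
  rewrite expr2 invfM -mulrA mulVf // mulr1 scale_scalar_mx mulVf //.
  by rewrite addrAC subrr add0r.
have [uA _] := mulmx1_unit AW.
by rewrite -[W]mul1mx -(mulVmx uA) -mulmxA AW mulmx1.
Qed.

Theorem theorem3 (R : realFieldType) (X : Type)
  (mu : X -> R) (sigma : X -> X -> R) (M k u r : nat)
  (dD : 'I_(M * k) -> X) (uU : 'I_u -> X)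
  (y : 'cV[R]_(M * k)) (s2 : R) (F : 'M[R]_(r, M * k)) :
  is_covariance sigma ->
  injective dD -> injective uU ->
  (forall i j, dD i <> uU j) ->
  0 < s2 ->
  (forall (i : 'I_r) (j : 'I_(M * k)), (j < i)%N -> F i j = 0) ->
  mu_tilde mu sigma dD uU y s2 F = mu_ICF mu sigma dD uU y s2 F /\
  Sig_tilde sigma dD uU s2 F = Sig_ICF sigma dD uU s2 F.
Proof.
move=> [sym _] _ _ _ s0 _.
have hPhi : \sum_(m < M) Phim F m = F *m F^T.
  rewrite -blocksum; apply: eq_bigr => m _; rewrite /Phim /Fm; congr (_ *m _).
  by apply/matrixP => i j; rewrite !mxE.
have hy : \sum_(m < M) ydot mu dD y F m = F *m (y - muv mu dD).
  rewrite -blocksum; apply: eq_bigr => m _; rewrite /ydot /Fm; congr (_ *m _).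
  by apply/matrixP => i j; rewrite (ord1 j) !mxE.
have hS : \sum_(m < M) Sdot sigma dD uU F m = F *m Sig sigma dD uU.
  rewrite -blocksum; apply: eq_bigr => m _; rewrite /Sdot /Fm; congr (_ *m _).
  by apply/matrixP => i j; rewrite !mxE.
have hT m : (Sdot sigma dD uU F m)^T =
    colsub (mxvec_index m) (Sig sigma uU dD) *m rowsub (mxvec_index m) F^T.
  rewrite /Sdot trmx_mul; congr (_ *m _); apply/matrixP => i j; rewrite !mxE // sym.
have hA : \sum_(m < M) Sig sigma uU (Dm dD m) *m (ydm y m - muv mu (Dm dD m))
    = Sig sigma uU dD *m (y - muv mu dD).
  rewrite -blocksum; apply: eq_bigr => m _; congr (_ *m _).
    by apply/matrixP => i j; rewrite !mxE.
  by apply/matrixP => i j; rewrite (ord1 j) !mxE.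
have hB : \sum_(m < M) Sig sigma uU (Dm dD m) *m Sig sigma (Dm dD m) uU
    = Sig sigma uU dD *m Sig sigma dD uU.
  rewrite -blocksum; apply: eq_bigr => m _; congr (_ *m _);
    by apply/matrixP => i j; rewrite !mxE.
split.
  rewrite /mu_tilde /mu_ICF /mu_tilde_m woodbury // sumrB -!scaler_sumr hA.
  rewrite -mulmx_suml.
  under eq_bigr => m _ do rewrite hT.
  rewrite blocksum /yddot hy /Phi hPhi; congr (_ + _).
  rewrite [_ *m (_ - _ *: _)]mulmxBr [(_ - _) *m _]mulmxBl -!scalemxAr -!scalemxAl mulmx1 !mulmxA //.
rewrite /Sig_tilde /Sig_ICF /Sig_tilde_m woodbury // sumrB -!scaler_sumr hB.
rewrite -mulmx_suml.
under eq_bigr => m _ do rewrite hT.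
rewrite blocksum /Sddot hS /Phi hPhi; congr (_ - _).
rewrite [_ *m (_ - _ *: _)]mulmxBr [(_ - _) *m _]mulmxBl -!scalemxAr -!scalemxAl mulmx1 !mulmxA //.
Qed.
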